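(* For every $t=0,1,\dots,T-1$, $H_t(s_t-\theta)\ge H_t(S_t)+K_t$.
   Context: Model. Fix an integer horizon $T\ge 2$, a discount factor $\alpha\in(0,1]$, and for $t=0,\dots,T-1$: unit ordering costs $c_t\in\mathbb R$, a salvage coefficient $c_T\in\mathbb R$, setup costs $K_t\ge 0$, functions $G_t:\mathbb R\to\mathbb R$, and independent nonnegative random demands $D_0,\dots,D_{T-1}$ with right-continuous distribution functions $F_t$ and finite means; all expectations appearing are assumed finite. Put $C_t(y)=(c_t-\alpha c_{t+1})y+G_t(y)+\alpha c_{t+1}E[D_t]$. Standing assumptions: (i) each $C_t$ is convex with $C_t(y)\to+\infty$ as $|y|\to\infty$; (ii) $K_t\ge \alpha K_{t+1}$ for $t=0,\dots,T-2$. Grid construction. Fix $\theta>0$, $z_m=m\theta$, $Z_\theta=\{z_m:m\in\mathbb Z\}$, $f_t(n)=F_t(z_{n+1})-F_t(z_n)$ ($n\ge -1$). $C^m_t=\min\{y: C_t(y)=\min_x C_t(x)\}$; with $z_{n_0}<C^m_t\le z_{n_0+1}$, $S^U_t=\min\{z_m\in Z_\theta: z_m\ge C^m_t,\ C_t(z_m)>C_t(z_{n_0})+K_t\}$. $s_{T-1}$ is a point with $s_{T-1}\le C^m_{T-1}$, $C_{T-1}(s_{T-1})=C_{T-1}(C^m_{T-1})+K_{T-1}$; $\bar I_{T-1}=s_{T-1}$. For $t=T-2,\dots,0$: $I_t=\max\{z_m\in Z_\theta: z_m<\min(\bar I_{t+1}-\theta,C^m_t)\}$, $\bar I_t=\max\{z_m\in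 Z_\theta: z_m\le I_t,\ C_t(z_m)>C_t(I_t)+K_t\}+\theta$. $H_{T-1}=C_{T-1}$, $S_{T-1}=C^m_{T-1}$; $V_t(y)=H_t(S_t)+K_t$ for $y<s_t$, $V_t(y)=H_t(y)$ for $y\ge s_t$. For $t=T-2,\dots,0$: $H_t(y)=C_t(y)+\alpha\sum_{n=-1}^\infty V_{t+1}(y-z_n)f_t(n)$; $S_t=\max\{z_m\in Z_\theta: I_t\le z_m\le S^U_t,\ H_t(z_m)=\min\{H_t(z_n):z_n\in Z_\theta, I_t\le z_n\le S^U_t\}\}$; $s_t=S_t$ if $K_t=0$, else $s_t=\min\{z_m\in Z_\theta:\bar I_t\le z_m\le S_t,\ H_t(z_m)\le H_t(S_t)+K_t\}$. *)

(* Defs.v *)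
From HB Require Import structures.
From mathcomp Require Import all_boot all_order all_algebra.
From mathcomp Require Import all_classical all_reals all_analysis.
Set Implicit Arguments.
Unset Strict Implicit.
Unset Printing Implicit Defensive.
Import Order.TTheory GRing.Theory Num.Theory.
Import numFieldNormedType.Exports.
Local Open Scope classical_set_scope.
Local Open Scope ring_scope.

Definition mutually_independent d (Om : measurableType d) (R : realType)
    (P : probability Om R) (X : nat -> {RV P >-> R}) (T : nat) : Prop :=
  forall (J : seq nat) (B : nat -> set R),
    uniq J -> all (fun j => (j < T)%N) J -> (forall j, measurable (B j)) ->
    P (\bigcap_(j in [set j | j \in J]) (X j @^-1` B j))
    = (\prod_(j <- J) P (X j @^-1` B j))%E.

Definition distr_fun d (Om : measurableType d) (R : realType)
    (P : probability Om R) (X : {RV P >-> R}) (x : R) : R :=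
  fine (cdf X x).

(** Mean E[D_t] as a real number (finiteness is a separate hypothesis). *)
Definition mean d (Om : measurableType d) (R : realType)
    (P : probability Om R) (X : {RV P >-> R}) : R :=
  fine ('E_P[X]).

Definition Cost d (Om : measurableType d) (R : realType)
    (P : probability Om R) (alpha : R) (c : nat -> R) (G : nat -> R -> R)
    (D : nat -> {RV P >-> R}) (t : nat) (y : R) : R :=
  (c t - alpha * c t.+1) * y + G t y + alpha * c t.+1 * mean (D t).

Definition convex_fun (R : realType) (f : R -> R) : Prop :=
  forall (x y l : R), 0 <= l <= 1 ->
    f (l * x + (1 - l) * y) <= l * f x + (1 - l) * f y.

Definition coercive (R : realType) (f : R -> R) : Prop :=
  (f x @[x --> +oo] --> +oo) /\ (f x @[x --> -oo] --> +oo).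

Definition least_minimizer (R : realType) (f : R -> R) (x : R) : Prop :=
  (forall z, f x <= f z) /\ (forall y, (forall z, f y <= f z) -> x <= y).

Definition zgrid (R : realType) (theta : R) (m : int) : R := m%:~R * theta.

Definition on_grid (R : realType) (theta x : R) : Prop :=
  exists m : int, x = zgrid theta m.

Definition grid_greatest (R : realType) (theta : R) (Q : R -> Prop) (x : R) :=
  [/\ on_grid theta x, Q x & forall y, on_grid theta y -> Q y -> y <= x].

Definition grid_least (R : realType) (theta : R) (Q : R -> Prop) (x : R) :=
  [/\ on_grid theta x, Q x & forall y, on_grid theta y -> Q y -> x <= y].

Definition fgrid (R : realType) (theta : R) (F : R -> R) (n : int) : R :=
  F (zgrid theta (n + 1)) - F (zgrid theta n).

Definition Vfun (R : realType) (H : R -> R) (S s K : R) (y : R) : R :=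
  if y < s then H S + K else H y.

(** sum_{n = -1}^oo W(y - z_n) f(n)  (index shift k = n + 1). *)
Definition grid_sum (R : realType) (theta : R) (W : R -> R) (f : int -> R)
    (y : R) : R :=
  limn [series W (y - zgrid theta (k%:Z - 1)) * f (k%:Z - 1)]_k.

(* Main.v *)
Require Import Defs.
From HB Require Import structures.
From mathcomp Require Import all_boot all_order all_algebra.
From mathcomp Require Import all_classical all_reals all_analysis.
From mathcomp Require Import lra zify.
Import Order.TTheory GRing.Theory Num.Theory.
Local Open Scope classical_set_scope.
Local Open Scope ring_scope.

Lemma grid_step (R : realType) (theta a b : R) : 0 < theta ->
  on_grid theta a -> on_grid theta b -> a < b -> a + theta <= b.
Proof.
move=> th [m ->] [n ->]; rewrite /zgrid => h.
have hmn : (m < n)%R by rewrite -(ltr_int R) -(ltr_pM2r th).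
have : (m + 1 <= n)%R by rewrite lezD1.
rewrite -(ler_int R) -(ler_pM2r th) intrD mulrDl mul1r.
done.
Qed.

Lemma convex_noninc (R : realType) (f : R -> R) (m x y : R) :
  convex_fun f -> (forall z, f m <= f z) -> x <= y -> y <= m -> f y <= f x.
Proof.
move=> cf hm hxy hym.
have [exm|xm] := eqVneq x m.
  rewrite -exm in hym.
  have hyx : y = x by apply/eqP; rewrite eq_le; apply/andP; split.
  by rewrite hyx.
have xlm : x < m by rewrite lt_neqAle xm (le_trans hxy hym).
set l := (m - y) / (m - x).
have mx0 : 0 < m - x by rewrite subr_gt0.
have hlm : l * (m - x) = m - y by rewrite /l divfK // lt0r_neq0.
have hl0 : 0 <= l by rewrite /l divr_ge0 //; lra.
have hl : 0 <= l <= 1 by apply/andP; split => //; nra.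
have hy : l * x + (1 - l) * m = y.
  nra.
have := cf x m l hl; rewrite hy => h.
apply: (le_trans h).
have := hm x => hmx.
case/andP: hl => _ hl1.
nra.
Qed.

Lemma gsum_eq (R : realType) (theta : R) (W : R -> R) (f : int -> R)
  (y1 y2 B v : R) : 0 < theta -> (forall x, x <= B + theta -> W x = v) ->
  y1 <= B -> y2 <= B -> grid_sum theta W f y1 = grid_sum theta W f y2.
Proof.
move=> th hW h1 h2; rewrite /grid_sum.
suff -> : (fun k : nat => W (y1 - zgrid theta (k%:Z - 1)) * f (k%:Z - 1)) =
  (fun k : nat => W (y2 - zgrid theta (k%:Z - 1)) * f (k%:Z - 1)) by [].
apply/funext => k.
have hk : 0 <= (k%:Z)%:~R * theta by rewrite mulr_ge0 // ?ltW // ler0z.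
have e : forall y, y <= B -> W (y - zgrid theta (k%:Z - 1)) = v.
  move=> y hy; apply: hW; rewrite /zgrid intrB mulrBl mul1r; lra.
by rewrite !e.
Qed.

Lemma on_grid_sub (R : realType) (theta x : R) :
  on_grid theta x -> on_grid theta (x - theta).
Proof. by case=> m ->; exists (m - 1); rewrite /zgrid intrB mulrBl mul1r. Qed.

Lemma on_grid_add (R : realType) (theta x : R) :
  on_grid theta x -> on_grid theta (x + theta).
Proof. by case=> m ->; exists (m + 1); rewrite /zgrid intrD mulrDl mul1r. Qed.

Theorem corollary4p1 (R : realType) (d : measure_display)
    (Om : measurableType d) (P : probability Om R)
    (T : nat) (alpha : R) (c K : nat -> R) (G : nat -> R -> R)
    (D : nat -> {RV P >-> R}) (theta : R)
    (Cm SU I Ibar S s : nat -> R) (n0 : nat -> int) (H : nat -> R -> R) :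
  (* model *)
  (2 <= T)%N ->
  0 < alpha <= 1 ->
  (forall t, (t < T)%N -> 0 <= K t) ->
  (forall t, (t < T)%N -> forall w, 0 <= D t w) ->
  (forall t, (t < T)%N -> ('E_P[D t])%E \is a fin_num) ->
  mutually_independent D T ->
  (* standing assumptions *)
  (forall t, (t < T)%N -> convex_fun (Cost alpha c G D t)) ->
  (forall t, (t < T)%N -> coercive (Cost alpha c G D t)) ->
  (forall t, (t.+1 < T)%N -> alpha * K t.+1 <= K t) ->
  (* grid construction *)
  0 < theta ->
  (forall t, (t < T)%N -> least_minimizer (Cost alpha c G D t) (Cm t)) ->
  (forall t, (t < T)%N ->
     zgrid theta (n0 t) < Cm t <= zgrid theta (n0 t + 1)) ->
  (forall t, (t < T)%N ->
     grid_least theta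
       (fun x => Cm t <= x /\
          Cost alpha c G D t x > Cost alpha c G D t (zgrid theta (n0 t)) + K t)
       (SU t)) ->
  s T.-1 <= Cm T.-1 ->
  Cost alpha c G D T.-1 (s T.-1) = Cost alpha c G D T.-1 (Cm T.-1) + K T.-1 ->
  Ibar T.-1 = s T.-1 ->
  (forall t, (t.+1 < T)%N ->
     grid_greatest theta (fun x => x < Num.min (Ibar t.+1 - theta) (Cm t)) (I t)) ->
  (forall t, (t.+1 < T)%N ->
     grid_greatest theta
       (fun x => x <= I t /\
          Cost alpha c G D t x > Cost alpha c G D t (I t) + K t)
       (Ibar t - theta)) ->
  (forall y, H T.-1 y = Cost alpha c G D T.-1 y) ->
  S T.-1 = Cm T.-1 ->
  (forall t, (t.+1 < T)%N -> forall y,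
     H t y = Cost alpha c G D t y
             + alpha * grid_sum theta (Vfun (H t.+1) (S t.+1) (s t.+1) (K t.+1))
                                 (fgrid theta (distr_fun (D t))) y) ->
  (forall t, (t.+1 < T)%N ->
     grid_greatest theta
       (fun x => (I t <= x <= SU t) /\
          (forall w, on_grid theta w -> I t <= w <= SU t -> H t x <= H t w))
       (S t)) ->
  (forall t, (t.+1 < T)%N -> K t = 0 -> s t = S t) ->
  (forall t, (t.+1 < T)%N -> K t <> 0 ->
     grid_least theta
       (fun x => (Ibar t <= x <= S t) /\ H t x <= H t (S t) + K t)
       (s t)) ->
  (* conclusion *)
  forall t, (t < T)%N -> H t (s t - theta) >= H t (S t) + K t.
Proof.
move=> hT _ _ _ _ _ hconv _ _ th hmin _ hSU hsT hCsT hIbT hI hIb hHT hST hH hS hs0 hs1.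
set C := Cost alpha c G D in hconv hmin hSU hCsT hI hIb hHT hH hS *.
move=> t tT.
have Hsum : forall t, (t.+1 < T)%N -> forall y1 y2, y1 <= I t -> y2 <= I t ->
    H t y1 - C t y1 = H t y2 - C t y2.
  move=> u uT y1 y2 h1 h2; rewrite !hH // ![C u _ + _]addrC !addrK; congr (_ * _).
  apply: (@gsum_eq _ _ _ _ _ _ (I u) (H u.+1 (S u.+1) + K u.+1)) => // x hx.
  have [gIu hIu _] := hI u uT.
  have hIu' : I u < Ibar u.+1 - theta by move: hIu; rewrite lt_min => /andP[].
  rewrite /Vfun.
  have [e|lt] := eqVneq u.+2 T.
    have e1 : T.-1 = u.+1 by rewrite -e.
    have -> : s u.+1 = Ibar u.+1 by rewrite -e1 hIbT.
    rewrite ifT //.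
    apply: (le_lt_trans hx); rewrite -ltrBrDr; exact: hIu'.
  have u2T : (u.+2 < T)%N by rewrite ltn_neqAle lt uT.
  have [gIb [hIbI _] _] := hIb u.+1 u2T.
  have st := @grid_step _ _ _ _ th gIu gIb hIu'.
  have [gS [/andP[hIS _] _] _] := hS u.+1 u2T.
  have [k0|k0] := eqVneq (K u.+1) 0.
    rewrite (hs0 _ u2T k0) k0 addr0.
    case: ifP => // /negbT; rewrite -leNgt => hSx.
    have -> : x = S u.+1.
      apply/eqP; rewrite eq_le hSx andbT.
      clear -hx st hIbI hIS; lra.
    by [].
  have [_ [/andP[hIbs _] _] _] := hs1 u.+1 u2T (fun e => negP k0 (introT eqP e)).
  rewrite ifT //.
  clear -hx st hIbs th; lra.
have [tT1|tT1] := boolP (t.+1 < T)%N; last first.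
  have et : t = T.-1.
    move: tT tT1; rewrite -leqNgt; clear; lia.
  have T1 : (T.-1 < T)%N by rewrite -et.
  rewrite et hHT hHT hST -hCsT.
  have [hm _] := hmin T.-1 T1.
  apply: (@convex_noninc _ _ (Cm T.-1)) => //; first exact: hconv.
  by rewrite lerBlDr lerDl ltW.
have [gIt hIt _] := hI t tT1.
have hICm : I t < Cm t by move: hIt; rewrite lt_min => /andP[].
have [_ [hCmSU _] _] := hSU t tT.
have [gS [/andP[hIS hSSU] hSmin] _] := hS t tT1.
have [k0|k0] := eqVneq (K t) 0.
  rewrite (hs0 _ tT1 k0) k0 addr0.
  have [le|lt] := lerP (I t) (S t - theta).
    apply: hSmin; first exact: on_grid_sub.
    apply/andP; split => //; clear -hSSU th; lra.
  have st := @grid_step _ _ _ _ th (@on_grid_sub _ _ _ gS) gIt lt.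
  have hSI : S t <= I t by clear -st; lra.
  have hSth : S t - theta <= I t by clear -hSI th; lra.
  have := Hsum t tT1 _ _ hSth hSI.
  have [hm _] := hmin t tT.
  have := @convex_noninc _ _ (Cm t) (S t - theta) (S t) (hconv t tT) hm.
  move=> /(_ _ _) h e; have {}h := h (ltac:(clear -th; lra)) (ltac:(clear -hSI hICm; lra)).
  clear -h e; lra.
have k0' : K t <> 0 by move=> e; move: k0; rewrite e eqxx.
have [gs [/andP[hIbs hsS] hsK] hsmin] := hs1 t tT1 k0'.
have [gIb [hIbI hCIb] _] := hIb t tT1.
have [le|lt] := lerP (Ibar t) (s t - theta).
  rewrite leNgt; apply/negP => hlt.
  have := hsmin (s t - theta) (@on_grid_sub _ _ _ gs).
  have hsS' : s t - theta <= S t by clear -hsS th; lra.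
  move=> /(_ (conj (introT andP (conj le hsS')) (ltW hlt))).
  clear -th; lra.
have gIb' : on_grid theta (Ibar t) by have := @on_grid_add _ _ _ gIb; rewrite subrK.
have st := @grid_step _ _ _ _ th (@on_grid_sub _ _ _ gs) gIb' lt.
have es : s t = Ibar t by apply/eqP; rewrite eq_le hIbs andbT; clear -st; lra.
rewrite es.
have hII : I t <= I t by [].
have := Hsum t tT1 _ _ hIbI hII.
have hSI : H t (S t) <= H t (I t).
  apply: hSmin => //; apply/andP; split => //; clear -hICm hCmSU; lra.
clear -hSI hCIb; lra.
Qed.
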